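(* Let $p$ and $q$ be distinct primes. Suppose $G$ is a finite non-abelian semi-direct product of a normal abelian Sylow $p$-subgroup $P$ by a cyclic $q$-complement $Q$. Suppose that $P$ is a direct product of cyclic groups of order $p^m$ for some positive integer $m$, that $|G:\mathbf{C}_G(P)|=q$, and that $Q$ acts (by conjugation) non-trivially and irreducibly on $P/P^p$. Then $G$ is exponent-critical.
   Context: A finite group $G$ is exponent-critical if $\exp(G)$ is not the least common multiple of the exponents of the proper non-abelian subgroups of $G$. $P^p$ denotes the subgroup of $P$ generated by the $p$-th powers. *)

(* Defs.v *)
From mathcomp Require Import all_boot all_fingroup all_solvable.
Set Implicit Arguments. Unset Strict Implicit. Unset Printing Implicit Defensive.
Local Open Scope group_scope.

Definition pow_subgroup (gT : finGroupType) (P : {set gT}) (p : nat) : {set gT} :=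
  <<[set x ^+ p | x in P]>>.

Definition exponent_critical (gT : finGroupType) (G : {group gT}) : bool :=
  exponent G !=
  \big[lcmn/1%N]_(H : {group gT} | (H \proper G) && ~~ abelian H) exponent H.

(* Main.v *)
Require Import Defs.
From mathcomp Require Import all_boot all_fingroup all_solvable.
Local Open Scope group_scope.

Theorem mainTheorem8 (gT : finGroupType) (p q m : nat) (G P Q : {group gT}) :
  prime p -> prime q -> p != q ->
  ~~ abelian G ->
  P \in 'Syl_p(G) -> P <| G -> abelian P ->
  q.-group Q -> cyclic Q -> P ><| Q = G ->
  (0 < m)%N -> homocyclic P -> exponent P = (p ^ m)%N ->
  #|G : 'C_G(P)| = q ->
  ~~ (Q / pow_subgroup P p \subset 'C(P / pow_subgroup P p)) ->
  acts_irreducibly (Q / pow_subgroup P p) (P / pow_subgroup P p) 'J ->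
  exponent_critical G.
Proof.
move=> pr_p pr_q neq_pq _ sylP nPG cPP qQ cycQ defG m_gt0 _ expP indC _ irr.
have pP : p.-group P by rewrite inE in sylP; exact: pHall_pgroup sylP.
have defPp : pow_subgroup P p = 'Mho^1(P) by rewrite /pow_subgroup (MhoE 1 pP) expn1.
rewrite defPp in irr.
have cardG := sdprod_card defG.
case/sdprodP: defG => _ defPQ nPQ tiPQ.
have sPG : P \subset G := normal_sub nPG.
have sQG : Q \subset G by rewrite -defPQ mulG_subr.
have nPG' : G \subset 'N(P) := normal_norm nPG.
have nMG : G \subset 'N('Mho^1(P)) := char_norm_trans (Mho_char 1 P) nPG'.
have key : forall H : {group gT}, H \proper G -> ~~ abelian H ->
    forall y, y \in H -> y \in P -> y ^+ (p ^ m.-1) = 1.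
  move=> H prH nabH y Hy Py; apply/eqP; apply/negPn/negP => ny.
  have sHG := proper_sub prH.
  have := proper_subn prH; apply/negP/negPn.
  set C := 'C_G(P).
  have sPC : P \subset C by rewrite subsetI sPG.
  have defC : P * (Q :&: C) = C.
    by rewrite group_modl // defPQ; apply/setIidPr; exact: subsetIl.
  have sQCP : Q :&: C \subset 'C(P).
    by apply: subset_trans (subsetIr _ _) (subsetIr _ _).
  have cCC : abelian C.
    rewrite -defC abelianM cPP (abelianS (subsetIl _ _) (cyclic_abelian cycQ)) /=.
    by [] || exact: sQCP.
  have nHC : ~~ (H \subset C) by apply: contra nabH => sHC; exact: abelianS sHC cCC.
  have nPH : H \subset 'N(P) := subset_trans sHG nPG'.
  have defL : (P <*> H)%G = P * H :> {set gT} by rewrite /= norm_joinEr.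
  have sPL : P \subset (P <*> H)%G := joing_subl _ _.
  have sHL : H \subset (P <*> H)%G := joing_subr _ _.
  have sLG : (P <*> H)%G \subset G by rewrite join_subG sPG.
  have defL2 : P * (Q :&: (P <*> H)%G) = (P <*> H)%G.
    by rewrite group_modl // defPQ; apply/setIidPr.
  have nXC : ~~ (Q :&: (P <*> H)%G \subset C).
    apply: contra nHC => sXC; apply: subset_trans sHL _.
    by rewrite -defL2 mulG_subG sPC.
  have QL : Q \subset (P <*> H)%G.
    have tiPQ1 : P :&: (Q :&: C) = 1.
      by apply/trivgP; rewrite -tiPQ setIS // subsetIl.
    have cardC : #|C| = (#|P| * #|Q :&: C|)%N by rewrite -{1}defC (TI_cardMg tiPQ1).
    have cardQ : #|Q| = (q * #|Q :&: C|)%N.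
      have := Lagrange (subsetIl G 'C(P)); rewrite -/C indC cardC -cardG.
      rewrite -mulnA => /eqP; rewrite eqn_pmul2l ?cardG_gt0 // => /eqP <-.
      by rewrite mulnC.
    have sXQ : Q :&: (P <*> H)%G \subset Q := subsetIl _ _.
    have sQ1Q : Q :&: C \subset Q := subsetIl _ _.
    have nXQ1 : ~~ (Q :&: (P <*> H)%G \subset Q :&: C).
      by apply: contra nXC => h; exact: subset_trans h (subsetIr _ _).
    rewrite -(cardSg_cyclic cycQ sXQ sQ1Q) in nXQ1.
    suff : Q \subset Q :&: (P <*> H)%G by move/subset_trans; apply; exact: subsetIr.
    rewrite -(cardSg_cyclic cycQ (subxx Q) sXQ).
    rewrite cardQ (card_pgroup (pgroupS sXQ qQ)) (card_pgroup (pgroupS sQ1Q qQ)).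
    rewrite (card_pgroup (pgroupS sXQ qQ)) (card_pgroup (pgroupS sQ1Q qQ)) in nXQ1.
    rewrite -expnS dvdn_Pexp2l ?prime_gt1 //.
    by rewrite dvdn_Pexp2l ?prime_gt1 // -ltnNge in nXQ1.
  have GL : G \subset (P <*> H)%G by rewrite -defPQ mulG_subG sPL.
  have sKP : H :&: P \subset P := subsetIr _ _.
  have nKG : G \subset 'N(H :&: P).
    apply: subset_trans GL _; rewrite defL mulG_subG.
    rewrite cents_norm ?sub_abelian_cent //.
    by rewrite normsI ?normG.
  have sPH : P \subset H.
    case/mingroupP: irr => _ minP.
    have sKPM : (H :&: P)%G / 'Mho^1(P) \subset P / 'Mho^1(P) := quotientS _ sKP.
    have := minP ((H :&: P)%G / 'Mho^1(P))%G; rewrite /= sKPM => eqKP.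
    have KP : (H :&: P)%G / 'Mho^1(P) = P / 'Mho^1(P).
      apply: eqKP => //; apply/andP; split.
        apply/trivgPn; exists (coset 'Mho^1(P) y).
          by apply: mem_quotient; rewrite inE Hy.
        apply: contra ny => /eqP y1.
        have : y \in 'Mho^1(P).
          by apply: coset_idr => //; apply: (subsetP nMG); apply: (subsetP sHG).
        rewrite (MhoEabelian 1 pP cPP) => /imsetP[x Px ->].
        rewrite -expgM -expnD add1n prednK // -expP expg_exponent //.
      rewrite /= astabsJ; apply: quotient_norms.
      exact: subset_trans sQG nKG.
    have nKM : (H :&: P)%G \subset 'N('Mho^1(P)).
      by apply: subset_trans nMG; apply: subset_trans sKP sPG.
    have : P / 'Mho^1(P) \subset ((H :&: P)%G <*> 'Mho^1(P))%G / 'Mho^1(P).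
      by rewrite quotientYidr // KP.
    rewrite quotientSGK ?joing_subr //; last exact: subset_trans sPG nMG.
    move=> sPKM.
    have : <<H :&: P>> = P.
      apply: Phi_nongen; rewrite (Phi_Mho pP cPP); apply/eqP; rewrite eqEsubset.
      by rewrite join_subG Mho_sub sKP joingC.
    rewrite genGid => <-; exact: subsetIl.
  by apply: subset_trans GL _; rewrite defL mulG_subG sPH subxx.
rewrite /exponent_critical; apply/negP => /eqP E.
have cardGP : #|G : P| = #|Q|.
  apply/eqP; rewrite -(eqn_pmul2l (cardG_gt0 P)) Lagrange // cardG //.
have dvdL : (\big[lcmn/1%N]_(H : {group gT} | (H \proper G) && ~~ abelian H)
              exponent H) %| (p ^ m.-1 * #|Q|)%N.
  apply: (big_ind (fun n => n %| (p ^ m.-1 * #|Q|)%N)) => //.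
    by move=> a b ha hb; rewrite dvdn_lcm ha hb.
  move=> H /andP[prH nabH]; apply/exponentP => x Hx.
  rewrite mulnC expgM; apply: (key H prH nabH); first by rewrite groupX.
  have Gx : x \in G := subsetP (proper_sub prH) x Hx.
  apply: coset_idr; first by rewrite groupX // (subsetP nPG').
  rewrite morphX ?(subsetP nPG') // -cardGP -card_quotient //.
  by rewrite expg_cardG // mem_quotient.
have : (p ^ m)%N %| (p ^ m.-1 * #|Q|)%N.
  by apply: dvdn_trans dvdL; rewrite -E -expP exponentS.
rewrite Gauss_dvdl.
  by rewrite dvdn_Pexp2l ?prime_gt1 // -ltnS prednK // ltnn.
rewrite coprime_pexpl // prime_coprime //; apply/negP => pQ.
have := pgroupP qQ p pr_p pQ; rewrite inE => /eqP epq.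
by rewrite epq eqxx in neq_pq.
Qed.
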